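(* Let $G$ be a finite connected unweighted graph with $E\ge1$ edges, enumerated as $e_1,\dots,e_E$, and let $M\in\mathbb{N}$. Define the graph $H=H(G,M)$ as follows. For each vertex $u$ of $G$ take a path (''short path'') $p_u$ with vertices $(u,1),(u,2),\dots,(u,E)$, consecutive ones adjacent; these paths are disjoint. For each edge $e_i=uv$ of $G$ add a path of length $M$ (with $M-1$ new internal vertices) joining $(u,i)$ and $(v,i)$; these ''long paths'' are internally disjoint from each other and from the short paths. Then $H$ has maximum degree at most $3$. Fix $i_0\in\{1,\dots,E\}$ and define $\psi:V(G)\to V(H)$ by $\psi(u)=(u,i_0)$. Then, with shortest path metrics $d_G,d_H$, for all vertices $u,v$ of $G$: $$M\,d_G(u,v)\le d_H(\psi(u),\psi(v))\le (2E+M)\,d_G(u,v).$$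
   Context: Graphs carry the shortest path metric; the length of a path is its number of edges. *)

(* Defs.v *)
From mathcomp Require Import all_boot.
Set Implicit Arguments. Unset Strict Implicit. Unset Printing Implicit Defensive.

Definition walkb (T : finType) (e : rel T) (x y : T) (n : nat) : bool :=
  [exists p : n.-tuple T, path e x p && (last x p == y)].

(* In a connected graph on T a shortest walk has length
   < #|T|, so searching n in [0, #|T|) suffices; for unreachable pairs the
   value #|T| is a meaningless default (never used here: both graphs are
   connected). *)
Definition dist (T : finType) (e : rel T) (x y : T) : nat :=
  find (walkb e x y) (iota 0 #|T|).

(* Vertices of H(G,M): short-path vertices (u,i), and internal vertices
   (i,k) of the long path of edge e_i, k : 'I_(M-1) being the (k+1)-th
   internal vertex counted from the endpoint (fst (ed i), i). *)
Definition HV (T : finType) (E M : nat) : finType :=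
  ((T * 'I_E) + ('I_E * 'I_M.-1))%type.

(* Adjacency of H(G,M); ed : 'I_E -> T * T is the edge enumeration,
   long path i joins ((ed i).1, i) to ((ed i).2, i). *)
Arguments HV : clear implicits.
Definition Hadj (T : finType) (E M : nat) (ed : 'I_E -> T * T) :
    rel (HV T E M) :=
  fun x y =>
  match x, y with
  | inl (a, j), inl (b, j') =>
      ((a == b) && ((j.+1 == j' :> nat) || (j'.+1 == j :> nat)))
      || ((j == j') && (M == 1)
          && (((a, b) == ed j) || ((b, a) == ed j)))
  | inl (a, j), inr (i, k) =>
      (i == j) && (((a == (ed i).1) && (k == 0 :> nat))
                   || ((a == (ed i).2) && (k.+2 == M)))
  | inr (i, k), inl (a, j) =>
      (i == j) && (((a == (ed i).1) && (k == 0 :> nat))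
                   || ((a == (ed i).2) && (k.+2 == M)))
  | inr (i, k), inr (i', k') =>
      (i == i') && ((k.+1 == k' :> nat) || (k'.+1 == k :> nat))
  end.
Arguments Hadj {T E} M ed _ _.

(* Main.v *)
Require Import Defs.
From mathcomp Require Import all_boot zify.
Set Implicit Arguments. Unset Strict Implicit. Unset Printing Implicit Defensive.

Section Gen.
Variables (V : finType) (r : rel V).

Definition walk (x y : V) n := exists p : seq V, [/\ size p = n, path r x p & last x p = y].

Lemma walkbP x y n : walkb r x y n <-> walk x y n.
Proof.
split.
  case/existsP=> t /andP[hp /eqP hl]; exists (val t); split => //; exact: size_tuple.
move=> [p [hs hp hl]]; apply/existsP; exists (Tuple (introT eqP hs)) => /=.
by rewrite hp hl eqxx.
Qed.

Lemma dist_le x y n : walk x y n -> dist r x y <= n.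
Proof.
move=> hw; rewrite /dist.
case: (ltnP n #|V|) => hn; last by apply: leq_trans (find_size _ _) _; rewrite size_iota.
rewrite leqNgt; apply/negP => /(before_find 0).
by rewrite nth_iota // add0n; move/negbT/negP; apply; apply/walkbP.
Qed.

Lemma dist_walk x y n : walk x y n -> walk x y (dist r x y).
Proof.
move=> [p [hs hp hl]].
move: hl; case/shortenP: hp => p' hp' hu _ hl.
have hsz : size p' < #|V|.
  by move/card_uniqP: hu => /= <-; exact: max_card.
have hh : has (walkb r x y) (iota 0 #|V|).
  apply/hasP; exists (size p'); first by rewrite mem_iota.
  by apply/walkbP; exists p'.
have := nth_find 0 hh; rewrite nth_iota ?add0n; last first.
  by move: hh; rewrite has_find size_iota.
by move/walkbP.
Qed.

Lemma walk0 x : walk x x 0.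
Proof. by exists [::]. Qed.

Lemma walk_snoc x y z n : walk x y n -> r y z -> walk x z n.+1.
Proof.
move=> [p [hs hp hl]] hyz; exists (rcons p z); split.
- by rewrite size_rcons hs.
- by rewrite rcons_path hp hl.
- by rewrite last_rcons.
Qed.

Lemma walk_cons x y z n : r x y -> walk y z n -> walk x z n.+1.
Proof.
move=> hxy [p [hs hp hl]]; exists (y :: p); split => //=; first by rewrite hs.
by rewrite hxy.
Qed.

Lemma walk_cat x y z m n : walk x y m -> walk y z n -> walk x z (m + n).
Proof.
move=> [p [hs hp hl]] [q [hs' hq hl']]; exists (p ++ q); split.
- by rewrite size_cat hs hs'.
- by rewrite cat_path hp hl hq.
- by rewrite last_cat hl.
Qed.

Lemma walk_rev (rs : symmetric r) x y n : walk x y n -> walk y x n.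
Proof.
move=> [p [hs hp hl]]; elim: p x n hs hp hl => [|z p IH] x n /= hs.
  by move=> _ <-; rewrite -hs; exact: walk0.
move=> /andP[hxz hp] hl; rewrite -hs.
apply: walk_snoc (IH z _ erefl hp hl) _; by rewrite rs.
Qed.

Lemma walk_chain (f : nat -> V) n : (forall m, m < n -> r (f m) (f m.+1)) -> walk (f 0) (f n) n.
Proof.
elim: n => [|n IH] h; first exact: walk0.
apply: walk_snoc (IH _) (h _ _) => // m hm; apply: h; lia.
Qed.

End Gen.

Lemma Hadj_sym (T : finType) E M (ed : 'I_E -> T * T) : symmetric (Hadj M ed).
Proof.
move=> [[a j]|[i k]] [[b j']|[i' k']] //=.
- case: (eqVneq j j') => [<-|hne].
    by rewrite (eq_sym b) (orbC ((b, a) == ed j)).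
  by rewrite (eq_sym b) (orbC (j'.+1 == j :> nat)).
- by rewrite (eq_sym i') (orbC (k'.+1 == k :> nat)).
Qed.

Lemma short_walk (T : finType) E' M (ed : 'I_E'.+1 -> T*T) a (j j' : 'I_E'.+1) :
  j <= j' -> walk (Hadj M ed) (inl (a,j)) (inl (a,j')) (j' - j).
Proof.
move=> h.
pose f m := (inl (a, inord (j + m)) : HV T E'.+1 M).
have := @walk_chain _ (Hadj M ed) f (j' - j).
rewrite /f addn0 subnKC // !inord_val; apply => m hm /=.
have := ltn_ord j'; move=> hj; rewrite eqxx /= !inordK; [|lia|lia].
by rewrite addnS eqxx.
Qed.

Lemma long_walk (T : finType) E M (ed : 'I_E -> T*T) i : 0 < M ->
  walk (Hadj M ed) (inl ((ed i).1,i)) (inl ((ed i).2,i)) M.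
Proof.
case: M => [//|[|M'']] _.
  apply: walk_cons (walk0 _ _) => /=.
  by rewrite !eqxx /=; case: (ed i) => x y; rewrite eqxx orbT.
pose f m := (if m == 0 then inl ((ed i).1, i) else if m == M''.+2 then inl ((ed i).2,i)
   else inr (i, inord m.-1)) : HV T E M''.+2.
have := @walk_chain _ (Hadj M''.+2 ed) f M''.+2.
rewrite /f /= eqxx; apply => m hm.
case: m hm => [|m] hm /=.
  by rewrite !eqxx /= inordK.
have -> : (m.+1 == M''.+2) = false by apply/negbTE; rewrite eqSS; lia.
case: (eqVneq m M'') => [->|hne] /=.
  by rewrite !eqxx /= inordK // eqxx orbT.
have -> : (m.+2 == M''.+2) = false by apply/negbTE; rewrite !eqSS.
by rewrite /= eqxx !inordK /= ?eqxx //; lia.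
Qed.

Section Lower.
Variables (T : finType) (e : rel T) (e_sym : symmetric e) (e_irr : irreflexive e)
  (E M : nat) (ed : 'I_E -> T * T) (ed_edge : forall i, e (ed i).1 (ed i).2) (b : T).

Definition W c n := exists k, walk e c b k /\ M * k <= n.

Lemma W_mono c m n : m <= n -> W c m -> W c n.
Proof. by move=> h [k [hw hk]]; exists k; split=> //; apply: leq_trans h. Qed.

Lemma W_edge c c' n : e c c' -> W c' n -> W c (n + M).
Proof.
move=> h [k [hw hk]]; exists k.+1; split; first exact: walk_cons hw.
by rewrite mulnS addnC leq_add2r.
Qed.

Definition Inv (x : HV T E M) n :=
  match x with
  | inl (a, _) => W a n
  | inr (i, k) => W (ed i).1 (n + k.+1) /\ W (ed i).2 (n + (M - k.+1))
  end.

Lemma Inv_step x y n : Hadj M ed x y -> Inv y n -> Inv x n.+1.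
Proof.
have e12 i : e (ed i).1 (ed i).2 := ed_edge i.
have e21 i : e (ed i).2 (ed i).1 by rewrite e_sym.
have ne12 i : ((ed i).1 == (ed i).2) = false.
  by apply/negP => /eqP h; have := e12 i; rewrite h e_irr.
case: x => [[a j]|[i k]]; case: y => [[a' j']|[i' k']] /=.
- case/orP => [/andP[/eqP -> _]|/andP[/andP[/eqP hj /eqP hM] h]] hW.
    by apply: W_mono hW.
  rewrite -addn1 -hM; apply: W_edge hW.
  by case/orP: h => /eqP h; [have := e12 j|have := e21 j]; rewrite -h.
- case/andP=> /eqP _ /orP[/andP[/eqP -> /eqP ->]|/andP[/eqP -> /eqP hk]] [h1 h2].
    by apply: W_mono h1; rewrite addn1.
  by apply: W_mono h2; lia.
- have hko := ltn_ord k.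
  case/andP=> /eqP _ /orP[/andP[/eqP -> /eqP hk0]|/andP[/eqP -> /eqP hk]] hW.
    split; first by apply: W_mono hW; lia.
    apply: W_mono (W_edge (e21 i) hW); lia.
  split; last by apply: W_mono hW; lia.
  apply: W_mono (W_edge (e12 i) hW); lia.
- have hko := ltn_ord k; have hk' := ltn_ord k'.
  case/andP=> /eqP ? /orP[]/eqP hkk; subst i' => -[h1 h2]; split.
  + by apply: W_mono h1; lia.
  + by apply: W_mono h2; lia.
  + by apply: W_mono h1; lia.
  + by apply: W_mono h2; lia.
Qed.

Lemma Inv_path j' p x : path (Hadj M ed) x p -> last x p = inl (b, j') -> Inv x (size p).
Proof.
elim: p x => [|y p IH] x /=.
  by move=> _ -> /=; exists 0; rewrite muln0; split => //; exact: walk0.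
by case/andP=> hxy hp hl; apply: Inv_step hxy (IH _ hp hl).
Qed.

End Lower.

Lemma card3 (V : finType) (A : {set V}) y1 y2 y3 : A \subset [set y1; y2; y3] -> #|A| <= 3.
Proof.
move=> h; apply: leq_trans (subset_leq_card h) _.
apply: leq_trans (leq_card_setU _ _) _; rewrite cards1 cards2; by case: (_ != _).
Qed.

Lemma insubd_val E (j : 'I_E) n : n < E -> val (insubd j n) = n.
Proof. by move=> h; rewrite val_insubd h. Qed.

Lemma in3 (V : finType) (y y1 y2 y3 : V) : y = y1 \/ y = y2 \/ y = y3 -> y \in [set y1; y2; y3].
Proof. by case=> [->|[->|->]]; rewrite !inE eqxx ?orbT. Qed.

Lemma deg (T : finType) E M (ed : 'I_E -> T*T) (ne : forall i, (ed i).1 != (ed i).2)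
  (M_pos : 0 < M) (x : HV T E M) : #|[set y | Hadj M ed x y]| <= 3.
Proof.
case: M M_pos x => [//|[|M'']] _ x.
- case: x => [[a j]|[i k]]; last by case: k.
  apply: (@card3 _ _ (inl (a, insubd j j.+1)) (inl (a, insubd j j.-1))
     (inl (if a == (ed j).1 then (ed j).2 else (ed j).1, j))).
  apply/subsetP => y; rewrite inE => H; apply: in3; move: H.
  case: y => [[b j']|[i k]] /=; last by case: k.
  case/orP => [/andP[/eqP <- /orP[]/eqP h]|/andP[/andP[/eqP <- _] h]].
  + by left; congr (inl (_, _)); apply: val_inj; rewrite /= insubd_val h.
  + right; left; congr (inl (_, _)); apply: val_inj; rewrite /= insubd_val -h //.
    have := ltn_ord j; lia.
  + right; right; congr (inl (_, _)).
    case/orP: h => /eqP h; rewrite -h /= ?eqxx //.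
    by have := ne j; rewrite -h /= eq_sym => /negbTE ->.
- case: x => [[a j]|[i k]].
  + apply: (@card3 _ _ (inl (a, insubd j j.+1)) (inl (a, insubd j j.-1))
     (inr (j, if a == (ed j).1 then inord 0 else inord M''))).
    apply/subsetP => y; rewrite inE => H; apply: in3; move: H; case: y => [[b j']|[i k]] /=.
      case/orP => [/andP[/eqP <- /orP[]/eqP h]|/andP[/andP[_ //]]].
      * by left; congr (inl (_, _)); apply: val_inj; rewrite /= insubd_val h.
      * right; left; congr (inl (_, _)); apply: val_inj; rewrite /= insubd_val -h //.
        have := ltn_ord j; lia.
    case/andP=> /eqP -> /orP[/andP[/eqP -> /eqP hk]|/andP[/eqP -> /eqP hk]];
      right; right; congr (inr (_, _)).
      by rewrite eqxx; apply: val_inj; rewrite /= inordK // hk.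
    have := ne j; rewrite eq_sym => /negbTE ->; apply: val_inj; rewrite /= inordK //; lia.
  + have hk := ltn_ord k.
    apply: (@card3 _ _ (inr (i, insubd k k.+1))
      (if k == 0 :> nat then inl ((ed i).1, i) else inr (i, insubd k k.-1))
      (inl ((ed i).2, i))).
    apply/subsetP => y; rewrite inE => H; apply: in3; move: H; case: y => [[b j']|[i' k']] /=.
      case/andP=> /eqP <- /orP[/andP[/eqP -> /eqP hk0]|/andP[/eqP -> /eqP hk2]].
        by right; left; rewrite hk0.
      by right; right.
    case/andP=> /eqP <- /orP[]/eqP h.
      move: (ltn_ord k') => hk'; left; congr (inr (_, _)); apply: val_inj; by rewrite /= insubd_val h.
    right; left.
    have -> : (k == 0 :> nat) = false by rewrite -h.
    move: (ltn_ord k') => hk'; congr (inr (_, _)); apply: val_inj; rewrite /= insubd_val; [lia|by rewrite -h; exact: hk'].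
Qed.
Unset Implicit Arguments. Set Strict Implicit.

Theorem mainTheorem4 (T : finType) (e : rel T)
  (e_sym : symmetric e) (e_irr : irreflexive e)
  (e_conn : forall x y : T, connect e x y)
  (E : nat) (E_pos : 0 < E) (ed : 'I_E -> T * T)
  (ed_edge : forall i, e (ed i).1 (ed i).2)
  (ed_inj : forall i j, (ed i == ed j) || (ed i == ((ed j).2, (ed j).1)) -> i = j)
  (ed_surj : forall x y, e x y -> exists i, (ed i = (x, y)) \/ (ed i = (y, x)))
  (M : nat) (M_pos : 0 < M) (i0 : 'I_E) :
  (forall x : HV T E M, #|[set y | Hadj M ed x y]| <= 3) /\
  (forall u v : T,
     M * dist e u v <= dist (Hadj M ed) (inl (u, i0)) (inl (v, i0)) /\
     dist (Hadj M ed) (inl (u, i0)) (inl (v, i0)) <= (2 * E + M) * dist e u v).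
Proof.
have ne i : (ed i).1 != (ed i).2.
  by apply/negP => /eqP h; have := ed_edge i; rewrite h e_irr.
split; first by move=> x; apply: deg.
case: E E_pos ed ed_edge ed_inj ed_surj i0 ne => // E' _ ed ed_edge _ ed_surj i0 ne.
have HS := @Hadj_sym T E'.+1 M ed.
have sa c (j j' : 'I_E'.+1) : exists n, n <= E' /\ walk (Hadj M ed) (inl (c, j)) (inl (c, j')) n.
  case: (leqP j j') => h.
    exists (j' - j); split; last exact: short_walk.
    have := ltn_ord j'; lia.
  exists (j - j'); split; last by apply: walk_rev HS _ _ _ _; apply: short_walk; exact: ltnW.
  have := ltn_ord j; lia.
have hop a z : e a z -> exists n, n <= 2 * E'.+1 + M /\
    walk (Hadj M ed) (inl (a, i0)) (inl (z, i0)) n.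
  move=> haz; have [i hi] := ed_surj a z haz.
  have [n1 [hn1 w1]] := sa a i0 i.
  have [n2 [hn2 w2]] := sa z i i0.
  have lw := long_walk (M:=M) ed i M_pos.
  have lw' : walk (Hadj M ed) (inl (a, i)) (inl (z, i)) M.
    case: hi => hi; rewrite hi /= in lw; first exact: lw.
    exact: walk_rev HS _ _ _ lw.
  exists (n1 + M + n2); split; first lia.
  exact: walk_cat (walk_cat w1 lw') w2.
move=> u v.
have up : forall d a, walk e a v d -> exists n, n <= (2 * E'.+1 + M) * d /\
    walk (Hadj M ed) (inl (a, i0)) (inl (v, i0)) n.
  elim=> [|d IH] a [p [hs hp hl]].
    case: p hs hp hl => // _ _ /= ->; exists 0; split => //; exact: walk0.
  case: p hs hp hl => // z p /= [hs] /andP[haz hp] hl.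
  have [n [hn wn]] := IH z (ex_intro _ p (And3 hs hp hl)).
  have [m [hm wm]] := hop a z haz.
  exists (m + n); split; last exact: walk_cat wm wn.
  rewrite mulnS; exact: leq_add.
have wG : walk e u v (dist e u v).
  have /connectP [p hp hl] := e_conn u v; apply: (@dist_walk _ _ _ _ (size p)).
  by exists p; split => //; rewrite -hl.
have [n [hn wH]] := up _ _ wG.
split; last exact: leq_trans (dist_le wH) hn.
have [q [hs hq hl]] := dist_walk wH.
have := @Inv_path T e e_sym e_irr E'.+1 M ed ed_edge v i0 q (inl (u, i0)) hq hl.
rewrite /= => -[k [hk hMk]].
rewrite -hs; apply: leq_trans hMk; rewrite leq_mul2l (dist_le hk) orbT //.
Qed.
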